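(* If $R$ is a simple compact Hausdorff topological semiring, then $\{0\}$ and $R$ are the only closed subtractive ideals of $R$.
   Context: A semiring is an algebra $(R,+,\cdot,0)$ such that $(R,+,0)$ is a commutative monoid, $(R,\cdot)$ is a semigroup (no multiplicative identity is required), multiplication distributes over addition on both sides, and $0\cdot x = x\cdot 0 = 0$ for all $x\in R$. A topological semiring is a semiring with a topology in which addition and multiplication are continuous. A Hausdorff topological semiring $R$ is called simple if every non-constant continuous semiring homomorphism from $R$ into any Hausdorff topological semiring is injective. An ideal of $R$ is a submonoid $A$ of $(R,+,0)$ with $RA\cup AR\subseteq A$. A subset $A\subseteq R$ is subtractive if for all $x\in R$ and $a\in A$, $x+a\in A$ implies $x\in A$. *)

(* Defs.v *)
From HB Require Import structures.
From mathcomp Require Import all_boot all_order.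
From mathcomp Require Import all_classical topology.
Set Implicit Arguments. Unset Strict Implicit. Unset Printing Implicit Defensive.
Local Open Scope classical_set_scope.

Definition is_semiring (T : Type) (add mul : T -> T -> T) (z : T) : Prop :=
  [/\ (forall x y z', add x (add y z') = add (add x y) z'),
      (forall x y, add x y = add y x),
      (forall x, add z x = x),
      (forall x y z', mul x (mul y z') = mul (mul x y) z') &
   [/\
      (forall x y z', mul x (add y z') = add (mul x y) (mul x z')),
      (forall x y z', mul (add x y) z' = add (mul x z') (mul y z')) &
      (forall x, mul z x = z /\ mul x z = z)]].

Definition is_tsemiring (T : topologicalType) (add mul : T -> T -> T) (z : T)
  : Prop :=
  [/\ is_semiring add mul z,
      continuous (fun p : T * T => add p.1 p.2) &
      continuous (fun p : T * T => mul p.1 p.2)].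

Definition is_cont_semiring_hom (R S : topologicalType)
  (addR mulR : R -> R -> R) (zR : R) (addS mulS : S -> S -> S) (zS : S)
  (f : R -> S) : Prop :=
  [/\ continuous f,
      (forall x y, f (addR x y) = addS (f x) (f y)),
      (forall x y, f (mulR x y) = mulS (f x) (f y)) &
      f zR = zS].

Definition simple_tsemiring (R : topologicalType) (add mul : R -> R -> R)
  (z : R) : Prop :=
  [/\ hausdorff_space R, is_tsemiring add mul z &
   forall (S : topologicalType) (addS mulS : S -> S -> S) (zS : S)
          (f : R -> S),
     hausdorff_space S -> is_tsemiring addS mulS zS ->
     is_cont_semiring_hom add mul z addS mulS zS f ->
     (exists x y, f x <> f y) -> injective f].

Definition is_ideal (T : Type) (add mul : T -> T -> T) (z : T) (A : set T)
  : Prop :=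
  [/\ A z,
      (forall a b, A a -> A b -> A (add a b)) &
      (forall r a, A a -> A (mul r a) /\ A (mul a r))].

Definition subtractive (T : Type) (add : T -> T -> T) (A : set T) : Prop :=
  forall x a, A a -> A (add x a) -> A x.

(* Main.v *)
From mathcomp Require Import all_boot all_order.
From mathcomp Require Import all_classical topology.
Set Implicit Arguments. Unset Strict Implicit.
Local Open Scope classical_set_scope.
Require Import Defs.

Definition brel (R : Type) (add : R -> R -> R) (A : set R) (x y : R) : Prop :=
  exists a b, [/\ A a, A b & add x a = add y b].


Lemma add4 (R : Type) (add mul : R -> R -> R) (z : R) :
  is_semiring add mul z ->
  forall x y a c, add (add x y) (add a c) = add (add x a) (add y c).
Proof.
move=> [addA addC _ _ _] x y a c.
by rewrite -!addA; congr (add x _); rewrite !addA (addC y a).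
Qed.

Lemma brel_refl (R : Type) (add mul : R -> R -> R) (z : R) (A : set R) :
  is_semiring add mul z -> A z -> forall x, brel add A x x.
Proof. by move=> _ Az x; exists z, z. Qed.

Lemma brel_sym (R : Type) (add : R -> R -> R) (A : set R) x y :
  brel add A x y -> brel add A y x.
Proof. by move=> [a [b [Aa Ab e]]]; exists b, a. Qed.

Lemma brel_trans (R : Type) (add mul : R -> R -> R) (z : R) (A : set R) :
  is_semiring add mul z -> (forall a b, A a -> A b -> A (add a b)) ->
  forall x y w, brel add A x y -> brel add A y w -> brel add A x w.
Proof.
move=> [addA addC _ _ _] AD x y w [a [b [Aa Ab e1]]] [c [d [Ac Ad e2]]].
exists (add a c), (add d b); split; [exact: AD|exact: AD|].
rewrite addA e1 -addA (addC b c) addA e2 -addA; reflexivity.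
Qed.

Lemma brel_add (R : Type) (add mul : R -> R -> R) (z : R) (A : set R) :
  is_semiring add mul z -> (forall a b, A a -> A b -> A (add a b)) ->
  forall x x' y y', brel add A x x' -> brel add A y y' ->
  brel add A (add x y) (add x' y').
Proof.
move=> sr AD x x' y y' [a [b [Aa Ab e1]]] [c [d [Ac Ad e2]]].
exists (add a c), (add b d); split; [exact: AD|exact: AD|].
rewrite (add4 sr x y a c) (add4 sr x' y' b d) e1 e2; reflexivity.
Qed.

Lemma brel_mul (R : Type) (add mul : R -> R -> R) (z : R) (A : set R) :
  is_semiring add mul z -> is_ideal add mul z A ->
  forall x x' y y', brel add A x x' -> brel add A y y' ->
  brel add A (mul x y) (mul x' y').
Proof.
move=> sr [Az AD AM] x x' y y' [a [b [Aa Ab e1]]] [c [d [Ac Ad e2]]].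
have sr' := sr; case: sr' => _ _ _ _ [mulDr mulDl _].
apply: (brel_trans sr AD (y := mul x' y)).
  exists (mul a y), (mul b y); split; [exact: (AM _ _ Aa).2|exact: (AM _ _ Ab).2|].
  rewrite -!mulDl e1; reflexivity.
exists (mul x' c), (mul x' d); split; [exact: (AM _ _ Ac).1|exact: (AM _ _ Ad).1|].
rewrite -!mulDr e2; reflexivity.
Qed.

Lemma brel_zE (R : Type) (add mul : R -> R -> R) (z : R) (A : set R) :
  is_semiring add mul z -> subtractive add A -> forall x, brel add A x z -> A x.
Proof.
move=> [_ _ add0 _ _] sub x [a [b [Aa Ab e]]].
apply: (sub x a Aa); rewrite e add0; exact: Ab.
Qed.

Lemma brel_Az (R : Type) (add mul : R -> R -> R) (z : R) (A : set R) :
  is_semiring add mul z -> A z -> forall a, A a -> brel add A a z.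
Proof. by move=> [_ addC _ _ _] Az a Aa; exists z, a; split => //; exact: addC. Qed.
Lemma diag_closed (Y : topologicalType) :
  hausdorff_space Y -> closed [set p : Y * Y | p.1 = p.2].
Proof.
move=> hY [p q] clp /=; apply: hY => A B nA nB.
have : nbhs (p, q) (A `*` B) by exists (A, B).
move/clp => [[x y] [/= -> [/= Ay By]]]; by exists y.
Qed.

Lemma eq_closed (X Y : topologicalType) (f g : X -> Y) :
  hausdorff_space Y -> continuous f -> continuous g ->
  closed [set x | f x = g x].
Proof.
move=> hY cf cg.
have -> : [set x | f x = g x] = (fun x => (f x, g x)) @^-1` [set p : Y * Y | p.1 = p.2] by [].
have hc : continuous (fun x => (f x, g x)).
  by move=> x; apply: cvg_pair; [exact: cf | exact: cg].
exact: (proj1 (continuous_closedP _) hc _ (diag_closed hY)).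
Qed.

Lemma prod_hausdorff (X Y : topologicalType) :
  hausdorff_space X -> hausdorff_space Y -> hausdorff_space (X * Y)%type.
Proof.
move=> hX hY [p1 p2] [q1 q2] cl; congr pair.
  apply: hX => A B nA nB.
  have nA' : nbhs (p1, p2) (A `*` setT) by exists (A, setT) => //; split => //; exact: filterT.
  have nB' : nbhs (q1, q2) (B `*` setT) by exists (B, setT) => //; split => //; exact: filterT.
  by have [[x y] [[/= Ax _] [/= Bx _]]] := cl _ _ nA' nB'; exists x.
apply: hY => A B nA nB.
have nA' : nbhs (p1, p2) (setT `*` A) by exists (setT, A) => //; split => //; exact: filterT.
have nB' : nbhs (q1, q2) (setT `*` B) by exists (setT, B) => //; split => //; exact: filterT.
by have [[x y] [[/= _ Ax] [/= _ Bx]]] := cl _ _ nA' nB'; exists y.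
Qed.

Lemma proj_closed (X Y : topologicalType) (G : set (X * Y)) :
  hausdorff_space X -> compact [set: X] -> compact [set: Y] -> closed G ->
  closed [set x | exists y, G (x, y)].
Proof.
move=> hX cX cY cG.
have cG' : compact G.
  apply: (subclosed_compact cG (compact_setX cX cY)) => p _; by split.
have cfst : continuous (fst : X * Y -> X) by move=> p; exact: cvg_fst.
have := continuous_compact (continuous_subspaceT cfst) cG'.
move/(compact_closed hX).
have -> // : [set x | exists y, G (x, y)] = fst @` G.
apply/seteqP; split => [x [y Gxy]|_ [[x y] Gxy <-]]; first by exists (x, y).
by exists y.
Qed.

Lemma cont2 (T U V : topologicalType) (op : U -> U -> V) (g h : T -> U) :
  continuous (fun p : U * U => op p.1 p.2) -> continuous g -> continuous h ->
  continuous (fun x => op (g x) (h x)).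
Proof. move=> cop cg ch x; apply: continuous2_cvg; [exact: (cop (g x, h x))|exact: cg|exact: ch]. Qed.

Lemma cont_fst (T U : topologicalType) : continuous (fst : T * U -> T).
Proof. by move=> p; exact: cvg_fst. Qed.
Lemma cont_snd (T U : topologicalType) : continuous (snd : T * U -> U).
Proof. by move=> p; exact: cvg_snd. Qed.
Lemma cont_comp (T U V : topologicalType) (g : T -> U) (h : U -> V) :
  continuous g -> continuous h -> continuous (h \o g).
Proof. by move=> cg ch x; apply: continuous_comp; [exact: cg|exact: ch]. Qed.
Lemma closed_pre (T U : topologicalType) (g : T -> U) (C : set U) :
  continuous g -> closed C -> closed (g @^-1` C).
Proof. by move=> cg; apply: (proj1 (continuous_closedP _)). Qed.

Local Open Scope quotient_scope.


Unset Implicit Arguments. Set Strict Implicit.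

Theorem corollary4p3 (R : topologicalType) (add mul : R -> R -> R) (z : R) :
  simple_tsemiring add mul z ->
  compact [set: R] ->
  forall A : set R,
    closed A -> is_ideal add mul z A -> subtractive add A ->
    A = [set z] \/ A = [set: R].
Proof.
move=> [hR [sr cadd cmul] simp] cR A cA [Az AD AM] sub.
have Aid : is_ideal add mul z A by split.
have [AT|nAT] := pselect (A = setT); first by right.
left.
have [x0 nx0] : exists x0, ~ A x0.
  apply: contrapT => nex; apply: nAT; apply/seteqP; split => // x _.
  apply: contrapT => nAx; apply: nex; exists x; exact: nAx.
pose eb : rel R := fun x y => `[< brel add A x y >].
have ebP : forall x y, eb x y <-> brel add A x y.
  by move=> x y; split => /asboolP.
have er : reflexive eb by move=> x; apply/ebP; exact: (brel_refl sr Az x).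
have es : symmetric eb.
  by move=> x y; apply/idP/idP => /ebP h; apply/ebP; exact: brel_sym.
have et : transitive eb.
  by move=> y x w /ebP h1 /ebP h2; apply/ebP; exact: (brel_trans sr AD h1 h2).
pose e : equiv_rel R := EquivRel eb er es et.
pose Q := {eq_quot e}.
pose S := quotient_topology Q.
pose f : R -> S := \pi_S.
have cf : continuous f := pi_continuous.
have fE : forall x y, f x = f y <-> e x y.
  move=> x y; split => h.
    by apply/eqmodP; exact: h.
  exact/eqmodP.
have fE' : forall x y, f x = f y <-> brel add A x y.
  move=> x y; split => h; first exact/ebP/fE.
  apply/fE; exact/ebP.
have fsurj : forall p : S, f (repr p) = p by move=> p; exact: reprK.
pose addS (p q : S) : S := f (add (repr p) (repr q)).
pose mulS (p q : S) : S := f (mul (repr p) (repr q)).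
pose zS := f z.
have frep : forall x, brel add A (repr (f x)) x.
  by move=> x; apply/fE'; rewrite fsurj.
have addSE : forall x y, addS (f x) (f y) = f (add x y).
  move=> x y; apply/fE'; exact: (brel_add sr AD (frep x) (frep y)).
have mulSE : forall x y, mulS (f x) (f y) = f (mul x y).
  move=> x y; apply/fE'; exact: (brel_mul sr Aid (frep x) (frep y)).
have Sind : forall P : S -> Prop, (forall x, P (f x)) -> forall p, P p.
  by move=> P H p; rewrite -(fsurj p); apply: H.
have srS : is_semiring addS mulS zS.
  move: (sr) => [addA addC add0 mulA [mulDr mulDl mul0]].
  split.
  - apply: (Sind) => x; apply: (Sind) => y; apply: (Sind) => w.
    rewrite !addSE addA; reflexivity.
  - apply: (Sind) => x; apply: (Sind) => y.
    rewrite !addSE addC; reflexivity.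
  - apply: (Sind) => x; rewrite /zS addSE add0; reflexivity.
  - apply: (Sind) => x; apply: (Sind) => y; apply: (Sind) => w.
    rewrite !mulSE mulA; reflexivity.
  split.
  - apply: (Sind) => x; apply: (Sind) => y; apply: (Sind) => w.
    rewrite addSE !mulSE addSE mulDr; reflexivity.
  - apply: (Sind) => x; apply: (Sind) => y; apply: (Sind) => w.
    rewrite addSE !mulSE addSE mulDl; reflexivity.
  - apply: (Sind) => x; rewrite /zS !mulSE (mul0 x).1 (mul0 x).2; split; reflexivity.
have cRR : compact [set: R * R].
  apply: (subclosed_compact closedT (compact_setX cR cR)) => uv _; by split.
have relC : closed [set wv : R * R | brel add A wv.1 wv.2].
  pose G := [set x : (R * R) * (R * R) | A x.2.1] `&`
            ([set x | A x.2.2] `&` [set x | add x.1.1 x.2.1 = add x.1.2 x.2.2]).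
  have -> : [set wv : R * R | brel add A wv.1 wv.2] = [set wv | exists ab, G (wv, ab)].
    apply/seteqP; split => [[w v] [a [b [Aa Ab H]]]|[w v] [[a b] [Aa [Ab H]]]].
      by exists (a, b).
    by exists a, b.
  apply: (proj_closed (prod_hausdorff hR hR) cRR cRR).
  have c11 : continuous (fun x : (R * R) * (R * R) => x.1.1).
    exact: (cont_comp (@cont_fst _ _) (@cont_fst _ _)).
  have c12 : continuous (fun x : (R * R) * (R * R) => x.1.2).
    exact: (cont_comp (@cont_fst _ _) (@cont_snd _ _)).
  have c21 : continuous (fun x : (R * R) * (R * R) => x.2.1).
    exact: (cont_comp (@cont_snd _ _) (@cont_fst _ _)).
  have c22 : continuous (fun x : (R * R) * (R * R) => x.2.2).
    exact: (cont_comp (@cont_snd _ _) (@cont_snd _ _)).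
  apply: closedI; first exact: (closed_pre c21 cA).
  apply: closedI; first exact: (closed_pre c22 cA).
  exact: (eq_closed hR (cont2 cadd c11 c21) (cont2 cadd c12 c22)).
have satC : forall F, closed F -> closed [set w | exists v, F v /\ brel add A w v].
  move=> F cF.
  apply: (@proj_closed R R ([set wv | F wv.2] `&` [set wv | brel add A wv.1 wv.2]) hR cR cR).
  apply: closedI => //; exact: (closed_pre (@cont_snd _ _) cF).
have hS : hausdorff_space S.
  rewrite open_hausdorff => p q /eqP npq.
  pose X := [set w | exists v, [set repr p] v /\ brel add A w v].
  pose Y := [set w | exists v, [set repr q] v /\ brel add A w v].
  have c1 : forall r : R, closed [set r].
    exact: (accessible_closed_set1 (hausdorff_accessible hR)).
  have cX : closed X := satC _ (c1 _).
  have cY : closed Y := satC _ (c1 _).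
  have XP : forall w, X w -> f w = p.
    move=> w [v [-> b]]; rewrite -[RHS]fsurj; exact/fE'.
  have YP : forall w, Y w -> f w = q.
    move=> w [v [-> b]]; rewrite -[RHS]fsurj; exact/fE'.
  have PX : forall w, f w = p -> X w.
    move=> w fw; exists (repr p); split => //; apply/fE'; rewrite fsurj; exact: fw.
  have PY : forall w, f w = q -> Y w.
    move=> w fw; exists (repr q); split => //; apply/fE'; rewrite fsurj; exact: fw.
  have nR := compact_normal hR cR.
  have : set_nbhs X (~` Y).
    apply/set_nbhsP; exists (~` Y); split => //; first exact: closed_openC.
    move=> w Xw Yw; apply: npq; rewrite -(XP w Xw); exact: YP.
  move/(nR X cX) => [V nXV clV].
  have [C [oC XC CV]] := (set_nbhsP _ _).1 nXV.
  pose D := ~` closure V.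
  have oD : open D by apply: closed_openC; exact: closed_closure.
  have YD : Y `<=` D by move=> w Yw clw; exact: (clV w clw Yw).
  have CD : forall w, C w -> D w -> False.
    by move=> w Cw; apply; apply: subset_closure; apply: CV.
  have satO : forall E : set R, open E -> open (f @^-1` [set s | forall w, f w = s -> E w]).
    move=> E oE.
    have -> : f @^-1` [set s | forall w, f w = s -> E w] =
              ~` [set w | exists v, (~` E) v /\ brel add A w v].
      apply/seteqP; split => w /=.
        move=> H [v [nEv b]]; apply: nEv; apply: H; apply/fE'; exact: brel_sym.
      move=> H w' fw; apply: contrapT => nEw; apply: H; exists w'; split => //.
      apply/fE'; symmetry; exact: fw.
    rewrite openC; apply: (satC); exact: open_closedC.
  exists ([set s | forall w, f w = s -> C w], [set s | forall w, f w = s -> D w]) => /=.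
    by split; rewrite inE => w fw; [apply: XC; exact: PX|apply: YD; exact: PY].
  split; [exact: satO|exact: satO|].
  apply/eqP; apply/seteqP; split => // s [H1 H2].
  exact: (CD _ (H1 _ (fsurj s)) (H2 _ (fsurj s))).
have hSS : hausdorff_space (S * S)%type := prod_hausdorff hS hS.
pose ff := fun uv : R * R => (f uv.1, f uv.2).
have cff : continuous ff.
  have cpair : continuous (fun p : S * S => (p.1, p.2)).
    have -> : (fun p : S * S => (p.1, p.2)) = id by apply/funext => -[].
    by move=> p; exact: cvg_id.
  exact: (cont2 cpair (cont_comp (@cont_fst _ _) cf) (cont_comp (@cont_snd _ _) cf)).
have opcont : forall (op : R -> R -> R) (opS : S -> S -> S),
    continuous (fun p : R * R => op p.1 p.2) ->
    (forall x y, opS (f x) (f y) = f (op x y)) ->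
    (forall p q, opS p q = f (op (repr p) (repr q))) ->
    continuous (fun p : S * S => opS p.1 p.2).
  move=> op opS cop opE opD.
  apply/continuous_closedP => C cC.
  pose K := [set uv : R * R | C (f (op uv.1 uv.2))].
  have Kc : closed K := closed_pre (cont_comp cop cf) cC.
  have KC : compact K.
    apply: (subclosed_compact Kc cRR) => //.
  have := continuous_compact (continuous_subspaceT cff) KC.
  move/(compact_closed hSS).
  have -> // : (fun p : S * S => opS p.1 p.2) @^-1` C = ff @` K.
  apply/seteqP; split.
    move=> [p q] /= Cpq; exists (repr p, repr q).
      rewrite /K /=; rewrite -opD; exact: Cpq.
    by rewrite /ff /= !fsurj.
  move=> _ [[u v] Kuv <-] /=; rewrite /ff /= opE; exact: Kuv.
have tsS : is_tsemiring addS mulS zS.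
  split => //.
    by apply: (opcont) cadd addSE _.
  by apply: (opcont) cmul mulSE _.
have hom : is_cont_semiring_hom add mul z addS mulS zS f.
  split; [exact: cf|move=> x y; symmetry; exact: addSE|move=> x y; symmetry; exact: mulSE|reflexivity].
have nc : exists x y, f x <> f y.
  exists x0, z => /fE' /(brel_zE sr sub); exact: nx0.
have inj := simp S addS mulS zS f hS tsS hom nc.
apply/seteqP; split => [a Aa|_ ->]; last exact: Az.
apply: inj; apply/fE'; exact: (brel_Az sr Az Aa).
Qed.
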